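(* Let $n\ge 2$ and $d\ge n+1$. For every Perazzo form $f$ of degree $d$ in $S$, the $h$-vector of $A_f$ satisfies $$h_i(A_f)\ \le\ \min\big((n+2)i+1,\ d+2\big)\quad\text{for }1\le i\le\lfloor d/2\rfloor$$ (and $h_i=h_{d-i}$). Moreover there exists a Perazzo form $f$ of degree $d$ (with $g=0$) for which equality holds for all $1\le i\le \lfloor d/2\rfloor$. Thus the componentwise maximum $h$-vector is $h_i=\min((n+2)i+1,d+2)$ for $1\le i\le\lfloor d/2\rfloor$, extended by symmetry, with $h_0=h_d=1$.
   Context: $K$ is an algebraically closed field of characteristic zero. $S=K[x_0,\dots,x_n,u,v]$ and $R=K[y_0,\dots,y_n,U,V]$ acts on $S$ by differentiation ($y_i=\partial/\partial x_i$, $U=\partial/\partial u$, $V=\partial/\partial v$); write $\theta\circ f$ for this action. A Perazzo form of degree $d$ is $f=x_0p_0+x_1p_1+\cdots+x_np_n+g$ where $p_0,\dots,p_n\in K[u,v]_{d-1}$ are linearly independent but algebraically dependent forms and $g\in K[u,v]_d$. $\operatorname{Ann}_R(f)=\{\theta\in R:\theta\circ f=0\}$ and $A_f=R/\operatorname{Ann}_R(f)$ is a graded artinian Gorenstein algebra of socle degree $d$; its $h$-vector is $h_i=\dim_K [A_f]_i$, which equals the dimension of the $K$-span of all order-$i$ partial derivatives of $f$, and satisfies $h_i=h_{d-i}$. *)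

(* Defs.v *)
From HB Require Import structures.
From mathcomp Require Import all_boot all_order all_algebra.
From mathcomp Require Import mpoly.
From Stdlib Require Import ClassicalEpsilon.

Set Implicit Arguments.
Unset Strict Implicit.
Unset Printing Implicit Defensive.

Import Order.TTheory GRing.Theory.
Local Open Scope ring_scope.

(* Variables of S = K[x_0..x_n,u,v]: index set 'I_(n.+3);
   x_j is variable j (0 <= j <= n), u is variable n+1, v is variable n+2. *)

Section Perazzo.
Variables (K : fieldType) (n : nat).

Definition var_x (j : 'I_n.+1) : 'I_n.+3 := inord j.
Definition var_u : 'I_n.+3 := inord n.+1.
Definition var_v : 'I_n.+3 := inord n.+2.

Definition embed_uv (q : {mpoly K[2]}) : {mpoly K[n.+3]} :=
  q \mPo [tuple 'X_var_u; 'X_var_v].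

Definition lin_indep_fam (k : nat) (I : finType) (P : pred I)
    (F : I -> {mpoly K[k]}) : Prop :=
  forall c : I -> K, \sum_(i | P i) c i *: F i = 0 -> forall i, P i -> c i = 0.

Definition alg_dep (p : 'I_n.+1 -> {mpoly K[2]}) : Prop :=
  exists P : {mpoly K[n.+1]}, P != 0 /\ P \mPo [tuple p i | i < n.+1] = 0.

Definition perazzo_data (d : nat) (p : 'I_n.+1 -> {mpoly K[2]})
    (g : {mpoly K[2]}) : Prop :=
  [/\ forall i, p i \is (d.-1).-homog,
      lin_indep_fam predT p,
      alg_dep p &
      g \is d.-homog].

Definition perazzo_form (p : 'I_n.+1 -> {mpoly K[2]}) (g : {mpoly K[2]})
    : {mpoly K[n.+3]} :=
  \sum_(i < n.+1) 'X_(var_x i) * embed_uv (p i) + embed_uv g.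

End Perazzo.

Section HVector.
Variables (K : fieldType) (N : nat).

(* Order-i partial derivatives of f are mderivm m f for monomials m of degree
   i; such m are enumerated in the finite type 'X_{1..N < i.+1}. *)
Definition order_pred (i : nat) : pred 'X_{1..N < i.+1} :=
  fun m => mdeg (val m) == i.

Definition indep_derivs (f : {mpoly K[N]}) (i : nat)
    (S : {set 'X_{1..N < i.+1}}) : Prop :=
  {subset S <= @order_pred i} /\
  lin_indep_fam (mem S) (fun m => mderivm (val m) f).
Arguments indep_derivs : clear implicits.

Definition indep_derivsb f i S : bool :=
  if excluded_middle_informative (indep_derivs f i S) then true else false.
Arguments indep_derivsb : clear implicits.

(* h_i(A_f) = dim_K span{ order-i partial derivatives of f }
           = maximal size of a linearly independent family of them. *)
Definition hvec (f : {mpoly K[N]}) (i : nat) : nat :=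
  \max_(S : {set 'X_{1..N < i.+1}} | indep_derivsb f i S) #|S|.

End HVector.

(* Main.v *)
Require Import Defs.
From HB Require Import structures.
From mathcomp Require Import all_boot all_order all_algebra.
From mathcomp Require Import mpoly.
From mathcomp Require Import zify.
From Stdlib Require Import ClassicalEpsilon.
Set Implicit Arguments. Unset Strict Implicit. Unset Printing Implicit Defensive.
Import Order.TTheory GRing.Theory.
Local Open Scope ring_scope.

Lemma steinitz (K : fieldType) (N : nat) (I : finType) (A : {set I})
  (F : I -> {mpoly K[N]}) (r : nat) (w : 'I_r -> {mpoly K[N]}) (a : I -> 'I_r -> K) :
  (forall x, x \in A -> F x = \sum_(k < r) a x k *: w k) ->
  lin_indep_fam (mem A) F -> (#|A| <= r)%N.
Proof.
move=> hF hind; rewrite leqNgt; apply/negP => hlt.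
have [x0 Ax0] : exists x0, x0 \in A.
  by apply/set0Pn; rewrite -card_gt0; apply: leq_ltn_trans hlt.
pose M : 'M[K]_(#|A|, r) := \matrix_(i, k) a (enum_val i) k.
have : kermx M != 0.
  rewrite -mxrank_eq0 mxrank_ker subn_eq0 -ltnNge.
  exact: leq_ltn_trans (rank_leq_col M) hlt.
case/matrix0Pn => i0 [j0 hnz].
pose y := row i0 (kermx M).
have hy : y *m M = 0 by rewrite -row_mul mulmx_ker row0.
pose c x := y 0 (enum_rank_in Ax0 x).
have hsum : \sum_(x | x \in A) c x *: F x = 0.
  rewrite (eq_bigr (fun x => \sum_(k < r) (c x * a x k) *: w k)); last first.
    by move=> x xA; rewrite hF // scaler_sumr; apply: eq_bigr => k _; rewrite scalerA.
  rewrite exchange_big /= big1 // => k _.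
  rewrite -scaler_suml.
  have -> : \sum_(x in A) c x * a x k = (y *m M) 0 k.
    rewrite mxE (big_enum_val (fun x => c x * a x k)) /=.
    by apply: eq_bigr => i _; rewrite /c enum_valK_in /y !mxE.
  by rewrite hy mxE scale0r.
have := hind c hsum (enum_val j0) (enum_valP j0).
rewrite /c enum_valK_in /y mxE => h.
by move: hnz; rewrite h eqxx.
Qed.

Section Idx.
Variable n : nat.
Notation X := 'X_{1..n.+3}.

Lemma val_var_x (j : 'I_n.+1) : nat_of_ord (@var_x n j) = j.
Proof. by rewrite /= inordK //; have := ltn_ord j; lia. Qed.
Lemma val_var_u : nat_of_ord (var_u n) = n.+1.
Proof. exact: inordK. Qed.
Lemma val_var_v : nat_of_ord (var_v n) = n.+2.
Proof. exact: inordK. Qed.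

Lemma var_x_inj : injective (@var_x n).
Proof. by move=> j1 j2 h; apply: ord_inj; rewrite /= -(val_var_x j1) -(val_var_x j2) h. Qed.
Lemma var_xu j : (@var_x n j == var_u n) = false.
Proof. apply/negbTE; rewrite -val_eqE /= val_var_x val_var_u ; have := ltn_ord j; lia. Qed.
Lemma var_xv j : (@var_x n j == var_v n) = false.
Proof. apply/negbTE; rewrite -val_eqE /= val_var_x val_var_v ; have := ltn_ord j; lia. Qed.
Lemma var_uv : (var_u n == var_v n) = false.
Proof. by apply/negbTE; rewrite -val_eqE /= val_var_u val_var_v; lia. Qed.

Lemma var_ux j : (var_u n == @var_x n j) = false.
Proof. by rewrite eq_sym var_xu. Qed.
Lemma var_vx j : (var_v n == @var_x n j) = false.
Proof. by rewrite eq_sym var_xv. Qed.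
Lemma var_vu : (var_v n == var_u n) = false.
Proof. by rewrite eq_sym var_uv. Qed.

Variant idx_spec : 'I_n.+3 -> Type :=
 | IdxX j : idx_spec (@var_x n j)
 | IdxU : idx_spec (var_u n)
 | IdxV : idx_spec (var_v n).

Lemma idxP k : idx_spec k.
Proof.
have [lt|ge] := ltnP k n.+1.
  have -> : k = @var_x n (Ordinal lt) by apply: ord_inj; rewrite val_var_x.
  exact: IdxX.
have [e|ne] := eqVneq (nat_of_ord k) n.+1.
  have -> : k = var_u n by apply: ord_inj; rewrite val_var_u.
  exact: IdxU.
have -> : k = var_v n.
  apply: ord_inj; rewrite val_var_v; have := ltn_ord k.
  move: ge ne; lia.
exact: IdxV.
Qed.

Definition xdeg (m : X) : nat := (\sum_(j < n.+1) m (@var_x n j))%N.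

Lemma mdeg_split (m : X) : mdeg m = (xdeg m + m (var_u n) + m (var_v n))%N.
Proof.
rewrite mdegE big_ord_recr big_ord_recr /= /xdeg; congr (_ + _ + _)%N.
- by apply: eq_bigr => j _; congr (m _); apply: ord_inj; rewrite /= val_var_x.
- by congr (m _); apply: ord_inj; rewrite /= val_var_u.
- by congr (m _); apply: ord_inj; rewrite /= val_var_v.
Qed.

Lemma xdegD (m1 m2 : X) : xdeg (m1 + m2)%MM = (xdeg m1 + xdeg m2)%N.
Proof. by rewrite /xdeg -big_split; apply: eq_bigr => j _; rewrite mnmDE. Qed.

Lemma xdegU j : xdeg U_(@var_x n j)%MM = 1%N.
Proof.
rewrite /xdeg (bigD1 j) //= mnm1E eqxx big1 // => k nk.
by rewrite mnm1E (inj_eq var_x_inj) eq_sym (negbTE nk).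
Qed.

Lemma xdeg_uv a b : xdeg (U_(var_u n) *+ a + U_(var_v n) *+ b)%MM = 0%N.
Proof. by rewrite /xdeg big1 // => j _; rewrite mnmDE !mulmnE !mnm1E eq_sym var_xu eq_sym var_xv. Qed.

Lemma xdeg0P (m : X) j : xdeg m = 0%N -> m (@var_x n j) = 0%N.
Proof. by move=> h; apply/eqP; move: h; rewrite /xdeg (bigD1 j) //=; lia. Qed.

Definition jx (m : X) : 'I_n.+1 := odflt ord0 [pick j | m (@var_x n j) != 0%N].

Lemma xdeg1P (m : X) : xdeg m = 1%N -> forall j, m (@var_x n j) = (j == jx m) :> nat.
Proof.
move=> h1; rewrite /jx; case: pickP => [j0 hj0|hn] /=; last first.
  move: h1; rewrite /xdeg big1 // => j _.
  by move: (hn j) => /= /negbFE /eqP.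
have hsplit := h1; rewrite /xdeg (bigD1 j0) //= in hsplit.
move: hsplit; set s1 := (X in (_ + X)%N = _) => hsplit.
have hs0 : s1 = 0%N by move: hj0; lia.
move=> j; have [->|nj] := eqVneq j j0; first by move: hj0; lia.
move/eqP: hs0; rewrite /s1 sum_nat_eq0 => /forallP /(_ j).
by rewrite nj /= => /eqP.
Qed.

End Idx.

Section Emb.
Variables (K : fieldType) (n : nat).
Notation X := 'X_{1..n.+3}.

Definition liftm (mu : 'X_{1..2}) : X :=
  (U_(var_u n) *+ mu ord0 + U_(var_v n) *+ mu ord_max)%MM.

Lemma embedX (mu : 'X_{1..2}) : embed_uv n ('X_[mu] : {mpoly K[2]}) = 'X_[liftm mu].
Proof.
rewrite /embed_uv comp_mpolyX big_ord_recr big_ord1 /=.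
have -> : widen_ord (leqnSn 1) ord0 = ord0 :> 'I_2 by apply: ord_inj.
by rewrite !(tnth_nth 0) /= /liftm mpolyXD !mpolyXn.
Qed.

Lemma embedE (q : {mpoly K[2]}) :
  embed_uv n q = \sum_(mu <- msupp q) q@_mu *: 'X_[liftm mu].
Proof. by rewrite /embed_uv comp_mpolyEX; apply: eq_bigr => mu _; rewrite -embedX. Qed.

Lemma mdeg_liftm mu : mdeg (liftm mu) = mdeg mu.
Proof.
rewrite mdegD !mdegMn !mdeg1 !mul1n [mdeg mu]mdegE big_ord_recr big_ord1 /=.
by have -> : widen_ord (leqnSn 1) ord0 = ord0 :> 'I_2 by apply: ord_inj.
Qed.

Lemma xdeg_liftm mu : xdeg (liftm mu) = 0%N.
Proof. exact: xdeg_uv. Qed.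

Lemma liftm_u mu : liftm mu (var_u n) = mu ord0.
Proof. by rewrite /liftm mnmDE !mulmnE !mnm1E eqxx (eq_sym (var_v n)) var_uv; lia. Qed.
Lemma liftm_v mu : liftm mu (var_v n) = mu ord_max.
Proof. by rewrite /liftm mnmDE !mulmnE !mnm1E eqxx var_uv; lia. Qed.

End Emb.

Section Coef.
Variables (K : fieldType) (N : nat).

Lemma coef_sumX (T : eqType) (r : seq T) (a : T -> K) (w : T -> 'X_{1..N}) nu :
  (\sum_(mu <- r) a mu *: 'X_[w mu])@_nu != 0 -> exists2 mu, mu \in r & w mu = nu.
Proof.
move=> hnz.
have /hasP [mu mur /eqP e] : has (fun mu => w mu == nu) r; last by exists mu.
move: hnz; apply: contraNT => /hasPn hn; apply/eqP.
rewrite raddf_sum /= big1_seq // => mu /= mur.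
by rewrite mcoeffZ mcoeffX (negbTE (hn mu mur)) mulr0.
Qed.

Lemma sum_neq0 (I : finType) (P : pred I) (F : I -> {mpoly K[N]}) nu :
  (\sum_(i | P i) F i)@_nu != 0 -> exists2 i, P i & (F i)@_nu != 0.
Proof.
move=> hnz.
have /existsP [i /andP [Pi h]] : [exists i, P i && ((F i)@_nu != 0)]; last by exists i.
move: hnz; apply: contraNT => /existsPn hn; apply/eqP.
rewrite raddf_sum /= big1 // => i Pi.
by move: (hn i); rewrite Pi /= negbK => /eqP.
Qed.
End Coef.

Section Gen.
Variables (R : comRingType) (N : nat).

Definition dfac (nu m : 'X_{1..N}) : nat := (\prod_(k < N) ((nu + m)%MM k)^_(m k))%N.

Lemma mcoeff_mderivm (m nu : 'X_{1..N}) (p : {mpoly R[N]}) :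
  (mderivm m p)@_nu = p@_(nu + m) *+ dfac nu m.
Proof.
elim/mpolyind: p => [|c m1 p _ _ ih]; first by rewrite linear0 !mcoeff0 mul0rn.
rewrite mderivmD mderivmZ !mcoeffD !mcoeffZ ih mulrnDl; congr (_ + _).
rewrite -mulrnAr; congr (_ * _).
rewrite mderivmX mcoeffZ !mcoeffX.
have [le|nle] := boolP (m <= m1)%MM.
  have -> : (m1 - m == nu)%MM = (m1 == nu + m)%MM.
    apply/eqP/eqP => [<-|->]; first by rewrite submK.
    by rewrite addmK.
  case: eqP => [->|_]; last by rewrite mul0rn mulr0.
  by rewrite mulr1 /dfac mulr1n.
have -> : (m1 == nu + m)%MM = false.
  apply/negbTE; apply: contra nle => /eqP ->; exact: lem_addl.
have -> : (\prod_(i < N) (m1 i)^_(m i))%N = 0%N.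
  have [i lt] : exists i, (m1 i < m i)%N.
    apply/existsP; apply: contraR nle => /existsPn h; apply/mnm_lepP => i.
    by move: (h i); rewrite -leqNgt.
  by rewrite (bigD1 i) //= ffact_small // mul0n.
by rewrite mul0r mul0rn.
Qed.
End Gen.

Section Supp.
Variables (K : fieldType) (n d : nat) (p : 'I_n.+1 -> {mpoly K[2]}) (g : {mpoly K[2]}).
Hypothesis hp : forall i, p i \is (d.-1).-homog.
Hypothesis hg : g \is d.-homog.
Hypothesis hd : (1 <= d)%N.
Notation f := (perazzo_form p g).

Lemma mcoeffD_neq0 (N : nat) (a b : {mpoly K[N]}) nu :
  (a + b)@_nu != 0 -> (a@_nu != 0) \/ (b@_nu != 0).
Proof.
rewrite mcoeffD; have [->|] := eqVneq (a@_nu) 0; last by left.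
by rewrite add0r; right.
Qed.

Lemma form_supp nu : f@_nu != 0 -> mdeg nu = d /\ (xdeg nu <= 1)%N.
Proof.
rewrite /perazzo_form => /mcoeffD_neq0 [].
  case/sum_neq0 => i _.
  rewrite embedE mulr_sumr.
  rewrite (eq_bigr (fun mu => (p i)@_mu *: 'X_[U_(var_x i) + liftm n mu])); last first.
    by move=> mu _; rewrite -scalerAr mpolyXD.
  case/coef_sumX => mu mus <-.
  have hm := dhomog_mf (hp i) mus.
  rewrite mdegD mdeg1 mdeg_liftm xdegD xdegU xdeg_liftm hm.
  split => //; lia.
rewrite embedE; case/coef_sumX => mu mus <-.
have hm := dhomog_mf hg mus.
by rewrite mdeg_liftm xdeg_liftm hm.
Qed.

Lemma deriv_supp (m nu : 'X_{1..n.+3}) :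
  (mderivm m f)@_nu != 0 -> mdeg (nu + m)%MM = d /\ (xdeg (nu + m)%MM <= 1)%N.
Proof.
rewrite mcoeff_mderivm => h; apply: form_supp.
by apply: contraNneq h => ->; rewrite mul0rn.
Qed.

End Supp.


Lemma card_inj_le (T T' : finType) (A : {set T}) (h : T -> T') :
  {in A &, injective h} -> (#|A| <= #|T'|)%N.
Proof. by move=> hi; rewrite -(card_in_imset hi); apply: max_card. Qed.

Lemma lin_indep_sub (K : fieldType) (N : nat) (I : finType) (A B : {set I})
  (F : I -> {mpoly K[N]}) :
  lin_indep_fam (mem A) F -> B \subset A -> lin_indep_fam (mem B) F.
Proof.
move=> hA sBA c hc x xB.
pose c' y := if y \in B then c y else 0.
have hz : \sum_(y | y \in A) c' y *: F y = 0.
  rewrite (bigID (fun y => y \in B)) /= [X in _ + X]big1 ?addr0; last first.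
    by move=> y /andP [_ /negbTE nb]; rewrite /c' nb scale0r.
  rewrite -[RHS]hc; apply: eq_big => [y|y /andP [_ yB]]; last by rewrite /c' yB.
  by apply/andP/idP => [[]//|yB]; split => //; apply: (subsetP sBA).
have xB' : x \in B := xB.
by have := hA c' hz x (subsetP sBA x xB); rewrite /c' xB'.
Qed.

Section Upper.
Variables (K : fieldType) (n d : nat) (p : 'I_n.+1 -> {mpoly K[2]}) (g : {mpoly K[2]}).
Hypothesis hp : forall i, p i \is (d.-1).-homog.
Hypothesis hg : g \is d.-homog.
Hypothesis hd : (1 <= d)%N.
Notation f := (perazzo_form p g).
Notation X := 'X_{1..n.+3}.

Definition rho (e k : nat) : X := (U_(var_u n) *+ k + U_(var_v n) *+ (e - k))%MM.

Lemma rho_u e k : rho e k (var_u n) = k.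
Proof. by rewrite /rho mnmDE !mulmnE !mnm1E eqxx var_vu; lia. Qed.

Lemma xfree_eq (nu : X) e : xdeg nu = 0%N -> mdeg nu = e -> nu = rho e (nu (var_u n)).
Proof.
move=> hx he; apply/mnmP => k; case: (idxP k) => [j||].
- by rewrite xdeg0P // /rho mnmDE !mulmnE !mnm1E var_ux var_vx.
- by rewrite rho_u.
- rewrite /rho mnmDE !mulmnE !mnm1E eqxx var_uv.
  by move: he; rewrite mdeg_split hx; lia.
Qed.

Lemma deriv_expand (x : X) (i : nat) : mdeg x = i -> xdeg x = 1%N ->
  mderivm x f = \sum_(k < (d - i).+1) (mderivm x f)@_(rho (d - i) k) *: 'X_[rho (d - i) k].
Proof.
move=> hmx hxx; apply/mpolyP => nu; rewrite raddf_sum /=.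
under eq_bigr => k _ do rewrite mcoeffZ mcoeffX.
have [h0|hnz] := eqVneq ((mderivm x f)@_nu) 0.
  rewrite h0 big1 // => k _; case: eqP => [->|_]; first by rewrite h0 mul0r.
  by rewrite mulr0.
have [hm hxd] := deriv_supp hp hg hd hnz.
have hxn : xdeg nu = 0%N by move: hxd; rewrite xdegD hxx; lia.
have hmn : mdeg nu = (d - i)%N by move: hm; rewrite mdegD hmx; lia.
have hle : (nu (var_u n) < (d - i).+1)%N.
  by move: hmn; rewrite mdeg_split; lia.
have hnu := xfree_eq hxn hmn.
rewrite (bigD1 (Ordinal hle)) //= -hnu eqxx mulr1 big1 ?addr0 // => k nk.
case: eqP => [e|_]; last by rewrite mulr0.
by case/eqP: nk; apply: ord_inj => /=; rewrite -e rho_u.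
Qed.

Lemma upper_bound (i : nat) : (1 <= i <= d)%N ->
  (hvec f i <= minn ((n + 2) * i + 1) (d + 2))%N.
Proof.
move=> /andP [hi1 hid]; rewrite /hvec; apply/bigmax_leqP => S.
rewrite /indep_derivsb; case: excluded_middle_informative => // [[hsub hind]] _.
pose D (x : 'X_{1..n.+3 < i.+1}) := mderivm (val x) f.
have hdeg x : x \in S -> mdeg (val x) = i.
  by move=> /hsub; rewrite /order_pred => /eqP.
have hx1 x : x \in S -> (xdeg (val x) <= 1)%N.
  move=> xS; rewrite leqNgt; apply/negP => hx2.
  have hD : mderivm (val x) f = 0.
    apply/mpolyP => nu; rewrite mcoeff0; apply/eqP; apply: contraT => hnz.
    have [_] := deriv_supp hp hg hd hnz.
    rewrite xdegD => h; suff : False by []; lia.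
  pose c y := if y == x then (1 : K) else 0.
  have := hind c _ x xS; rewrite /c eqxx => h.
  suff : (1 : K) = 0 by move/eqP; rewrite oner_eq0.
  apply: h; rewrite (bigD1 x) //= big1 ?addr0.
    by rewrite hD scaler0.
  by move=> y /andP [_ /negbTE ->]; rewrite scale0r.
pose B := [set x : 'X_{1..n.+3 < i.+1} | xdeg (val x) == 0%N].
have hcard := cardsID B S.
have h0 : (#|S :&: B| <= i.+1)%N.
  apply: (leq_trans _ (eq_leq (card_ord i.+1))).
  apply: (@card_inj_le _ 'I_i.+1 _ (fun x : 'X_{1..n.+3 < i.+1} => (inord (val x (var_u n)) : 'I_i.+1))).
  move=> x y; rewrite !inE => /andP [xS /eqP xx] /andP [yS /eqP yx] e.
  have hxu : (val x (var_u n) <= i)%N by have := hdeg x xS; rewrite mdeg_split; lia.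
  have hyu : (val y (var_u n) <= i)%N by have := hdeg y yS; rewrite mdeg_split; lia.
  move: e => /(congr1 (@nat_of_ord _)); rewrite !inordK // => e.
  apply: val_inj; rewrite (xfree_eq xx (hdeg x xS)) (xfree_eq yx (hdeg y yS)).
  by rewrite e.
have hS1 x : x \in S :\: B -> xdeg (val x) = 1%N.
  rewrite !inE => /andP [hx xS]; have := hx1 x xS; move: hx.
  by case: (xdeg _) => [|[|k]].
have h1a : (#|S :\: B| <= n.+1 * i)%N.
  have hc : #|{: 'I_n.+1 * 'I_i.-1.+1}| = (n.+1 * i)%N by rewrite card_prod !card_ord prednK.
  rewrite -hc.
  apply: (@card_inj_le _ _ _ (fun x : 'X_{1..n.+3 < i.+1} => (jx (val x), (inord (val x (var_u n)) : 'I_i.-1.+1)))).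
  move=> x y xS yS [ej e].
  have xS' : x \in S by move: xS; rewrite !inE => /andP [].
  have yS' : y \in S by move: yS; rewrite !inE => /andP [].
  have hxu : (val x (var_u n) < i)%N.
    by have := hdeg x xS'; rewrite mdeg_split (hS1 x xS); lia.
  have hyu : (val y (var_u n) < i)%N.
    by have := hdeg y yS'; rewrite mdeg_split (hS1 y yS); lia.
  move: e => /(congr1 (@nat_of_ord _)); rewrite !inordK ?prednK //; try exact: hxu; try exact: hyu.
  move=> e0; have e : val x (var_u n) = val y (var_u n) := e0.
  apply: val_inj; apply/mnmP => k; case: (idxP k) => [j||].
  - by rewrite (xdeg1P (hS1 x xS)) (xdeg1P (hS1 y yS)) ej.
  - exact: e.
  - have := hdeg x xS'; have := hdeg y yS'; rewrite !mdeg_split (hS1 x xS) (hS1 y yS).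
    by move: e; lia.
have h1b : (#|S :\: B| <= (d - i).+1)%N.
  apply: (@steinitz _ _ _ _ (fun x => mderivm (val x) f) _
    (fun k : 'I_(d - i).+1 => 'X_[rho (d - i) k])
    (fun x k => (mderivm (val x) f)@_(rho (d - i) k))).
    move=> x xS; apply: deriv_expand; last exact: hS1.
    by apply: hdeg; move: xS; rewrite !inE => /andP [].
  by apply: lin_indep_sub hind _; apply: subsetDl.
move: hcard h0 h1a h1b; set a := #|S :&: B|; set b := #|S :\: B|; set c := #|S|.
have -> : ((n + 2) * i + 1 = n.+1 * i + i.+1)%N by rewrite -addn1 !mulnDl; lia.
set q := (n.+1 * i)%N; move: hid; lia.
Qed.

End Upper.


Section Comp.
Variable n : nat.
Notation X := 'X_{1..n.+3}.
Definition mono (a b : nat) : X := (U_(var_u n) *+ a + U_(var_v n) *+ b)%MM.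

Lemma mono_x a b j : mono a b (@var_x n j) = 0%N.
Proof. by rewrite /mono mnmDE !mulmnE !mnm1E var_ux var_vx. Qed.
Lemma mono_u a b : mono a b (var_u n) = a.
Proof. by rewrite /mono mnmDE !mulmnE !mnm1E eqxx var_vu; lia. Qed.
Lemma mono_v a b : mono a b (var_v n) = b.
Proof. by rewrite /mono mnmDE !mulmnE !mnm1E eqxx var_uv; lia. Qed.
Lemma Ux_x j k : (U_(@var_x n j)%MM : X) (@var_x n k) = (j == k) :> nat.
Proof. by rewrite mnm1E (inj_eq (@var_x_inj n)). Qed.
Lemma Ux_u j : (U_(@var_x n j)%MM : X) (var_u n) = 0%N.
Proof. by rewrite mnm1E var_xu. Qed.
Lemma Ux_v j : (U_(@var_x n j)%MM : X) (var_v n) = 0%N.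
Proof. by rewrite mnm1E var_xv. Qed.
Lemma xdeg_mono a b : xdeg (mono a b) = 0%N.
Proof. exact: xdeg_uv. Qed.
Lemma mdeg_mono a b : mdeg (mono a b) = (a + b)%N.
Proof. by rewrite mdeg_split xdeg_mono mono_u mono_v. Qed.
End Comp.

Notation compE := (mnmDE, mono_x, mono_u, mono_v, Ux_x, Ux_u, Ux_v).

Section Example.
Variables (K : fieldType) (n d : nat) (e : nat -> nat).
Hypothesis he_le : forall j, (j <= n)%N -> (e j <= d.-1)%N.
Hypothesis he_inj : forall j j', (j <= n)%N -> (j' <= n)%N -> e j = e j' -> j = j'.
Notation X := 'X_{1..n.+3}.

Definition mu (j : 'I_n.+1) : 'X_{1..2} := (U_(ord0) *+ e j + U_(ord_max) *+ (d.-1 - e j))%MM.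
Definition pex (j : 'I_n.+1) : {mpoly K[2]} := 'X_[mu j].
Definition rhoj (j : 'I_n.+1) : X := (U_(@var_x n j) + mono n (e j) (d.-1 - e j))%MM.
Notation fex := (perazzo_form pex 0).

Lemma liftm_mu j : liftm n (mu j) = mono n (e j) (d.-1 - e j).
Proof. by rewrite /liftm /mono /mu !mnmDE !mulmnE !mnm1E /= !mul1n !mul0n addn0 add0n. Qed.

Lemma fex_eq : fex = \sum_(j < n.+1) 'X_[rhoj j].
Proof.
rewrite /perazzo_form /embed_uv comp_mpoly0 addr0; apply: eq_bigr => j _.
by rewrite /pex -/(embed_uv n _) embedX liftm_mu -mpolyXD.
Qed.

Lemma rhoj_inj : injective rhoj.
Proof.
move=> j j' /(congr1 (fun m : X => m (var_u n))); rewrite !compE !add0n => h.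
by apply: ord_inj; apply: he_inj => //; rewrite -ltnS.
Qed.

Lemma fex_coef nu : fex@_nu = \sum_(j < n.+1) (rhoj j == nu)%:R.
Proof. by rewrite fex_eq raddf_sum /=; apply: eq_bigr => j _; rewrite mcoeffX. Qed.

Lemma fex_coef_rho j : fex@_(rhoj j) = 1.
Proof.
rewrite fex_coef (bigD1 j) //= eqxx big1 ?addr0 // => k nk.
by rewrite (inj_eq rhoj_inj) (negbTE nk).
Qed.

Lemma fex_coef0 nu : (forall j, rhoj j != nu) -> fex@_nu = 0.
Proof. by move=> h; rewrite fex_coef big1 // => j _; rewrite (negbTE (h j)). Qed.

End Example.


Lemma indep_img (K : fieldType) (N : nat) (J I : finType) (mk : J -> I)
  (F : I -> {mpoly K[N]}) (wt : J -> 'X_{1..N}) :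
  injective mk -> (forall x, (F (mk x))@_(wt x) != 0) ->
  (forall x y, x != y -> (F (mk y))@_(wt x) = 0) ->
  lin_indep_fam (mem (mk @: setT)) F.
Proof.
move=> imk hd ho c hc s /imsetP [x _ ->].
have := congr1 (mcoeff (wt x)) hc.
rewrite (big_imset _ (in2W imk)) /= raddf_sum /= (bigD1 x) //= big1 ?addr0.
  by rewrite mcoeffZ mcoeff0 => /eqP; rewrite mulf_eq0 (negbTE (hd x)) orbF => /eqP.
by move=> y /andP [_ nyx]; rewrite mcoeffZ ho ?mulr0 // eq_sym.
Qed.

Lemma dfac_neq0 (K : fieldType) (charK0 : [pchar K] =i pred0) N (nu m : 'X_{1..N}) :
  (dfac nu m)%:R != 0 :> K.
Proof.
rewrite (pcharf0P _).1 // -lt0n /dfac prodn_gt0 // => k.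
by rewrite ffact_gt0 mnmDE leq_addl.
Qed.

Section Lower.
Variables (K : fieldType) (charK0 : [pchar K] =i pred0) (n d : nat) (e : nat -> nat).
Hypothesis he_le : forall j, (j <= n)%N -> (e j <= d.-1)%N.
Hypothesis he_inj : forall j j', (j <= n)%N -> (j' <= n)%N -> e j = e j' -> j = j'.
Variables (i : nat) (J1 : finType) (jj : J1 -> 'I_n.+1) (aa : J1 -> nat) (jb : 'I_i.+1 -> 'I_n.+1).
Hypothesis hi : (1 <= i)%N.
Hypothesis hval : forall z, [/\ (aa z < i)%N, (aa z <= e (jj z))%N & (i.-1 - aa z <= d.-1 - e (jj z))%N].
Hypothesis hkk : forall z z', (e (jj z) - aa z = e (jj z') - aa z')%N -> z = z'.
Hypothesis hjb : forall a : 'I_i.+1, (a <= e (jb a))%N /\ (i - a <= d.-1 - e (jb a))%N.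
Notation X := 'X_{1..n.+3}.
Notation fex := (perazzo_form (@pex K n d e) 0).

Definition W (x : 'I_i.+1 + J1) : X :=
  match x with
  | inl a => mono n a (i - a)
  | inr z => (U_(@var_x n (jj z)) + mono n (aa z) (i.-1 - aa z))%MM
  end.
Definition wt (x : 'I_i.+1 + J1) : X :=
  match x with
  | inl a => (U_(@var_x n (jb a)) + mono n (e (jb a) - a) (d.-1 - e (jb a) - (i - a)))%MM
  | inr z => mono n (e (jj z) - aa z) (d.-1 - e (jj z) - (i.-1 - aa z))
  end.
Definition jof (x : 'I_i.+1 + J1) := match x with inl a => jb a | inr z => jj z end.

Lemma W_deg x : mdeg (W x) = i.
Proof.
case: x => [a|z] /=.
  by rewrite mdeg_mono; have := ltn_ord a; lia.
by rewrite mdegD mdeg1 mdeg_mono; case: (hval z); lia.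
Qed.

Lemma wtW x : (wt x + W x)%MM = rhoj d e (jof x).
Proof.
apply/mnmP => k; case: x => [a|z] /=; case: (idxP k) => [j||]; rewrite /rhoj !compE //.
all: try (have [h1 h2] := hjb a); try (case: (hval z) => h1 h2 h3).
all: try (have := he_le (ltn_ord (jb a))); try (have := he_le (ltn_ord (jj z))); lia.
Qed.

Lemma xdeg_rhoj (j : 'I_n.+1) : xdeg (rhoj d e j) = 1%N.
Proof. by rewrite /rhoj xdegD xdegU xdeg_mono. Qed.

Lemma xdeg_Umono (j : 'I_n.+1) a b : xdeg (U_(@var_x n j) + mono n a b)%MM = 1%N.
Proof. by rewrite xdegD xdegU xdeg_mono. Qed.

Lemma W_inj : injective W.
Proof.
move=> [a|z] [a'|z'] /=.
- move/(congr1 (fun m : X => m (var_u n))); rewrite !compE => h.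
  by congr inl; apply: ord_inj.
- by move/(congr1 (@xdeg n)); rewrite xdeg_Umono !xdeg_mono.
- by move/(congr1 (@xdeg n)); rewrite xdeg_Umono !xdeg_mono.
- move=> h; have := congr1 (fun m : X => m (@var_x n (jj z))) h.
  rewrite !compE eqxx !addn0; case: eqP => [ejj _|_] //.
  have := congr1 (fun m : X => m (var_u n)) h; rewrite !compE => ea.
  by congr inr; apply: hkk; rewrite ejj; move: ea; lia.
Qed.

Lemma cross x y : x != y -> forall j, rhoj d e j != (wt x + W y)%MM.
Proof.
move=> nxy j; apply/eqP => h; move: nxy; case: x h => [a|z]; case: y => [a'|z'] /= h.
- have := congr1 (fun m : X => m (@var_x n (jb a))) h.
  rewrite /rhoj !compE eqxx !addn0; case: eqP => [ej _|_] //.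
  have := congr1 (fun m : X => m (var_u n)) h; rewrite /rhoj !compE ej.
  have [h1 _] := hjb a => ea.
  suff -> : a = a' by rewrite eqxx.
  by apply: ord_inj; lia.
- by have := congr1 (@xdeg n) h; rewrite xdeg_rhoj xdegD ?xdeg_Umono ?xdeg_mono.
- by have := congr1 (@xdeg n) h; rewrite xdeg_rhoj xdegD ?xdeg_Umono ?xdeg_mono.
- have := congr1 (fun m : X => m (@var_x n (jj z'))) h.
  rewrite /rhoj !compE eqxx !addn0; case: eqP => [ej _|_] //.
  have := congr1 (fun m : X => m (var_u n)) h; rewrite /rhoj !compE ej => ea.
  case: (hval z') => _ h2 _.
  suff -> : z = z' by rewrite eqxx.
  by apply: hkk; lia.
Qed.

Definition mk x : 'X_{1..n.+3 < i.+1} := insubd bm0 (W x).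

Lemma mkK x : val (mk x) = W x.
Proof. by rewrite insubdK // unfold_in /= W_deg. Qed.

Lemma lower : (i.+1 + #|J1| <= hvec fex i)%N.
Proof.
set S := mk @: setT.
have mk_inj : injective mk by move=> x y /(congr1 val); rewrite !mkK => /W_inj.
have hS : #|S| = (i.+1 + #|J1|)%N by rewrite card_imset // cardsT card_sum card_ord.
rewrite -hS /hvec; apply: leq_bigmax_cond.
rewrite /indep_derivsb; case: excluded_middle_informative => // hn; exfalso; apply: hn; split.
  by move=> s /imsetP [x _ ->]; rewrite unfold_in /order_pred mkK W_deg.
apply: (@indep_img _ _ _ _ mk _ wt) => //.
  move=> x; rewrite mkK mcoeff_mderivm wtW (@fex_coef_rho K n d e he_inj).
  exact: dfac_neq0.
move=> x y nxy; rewrite mkK mcoeff_mderivm fex_coef0 ?mul0rn // => j.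
exact: cross.
Qed.

End Lower.


Section Data.
Variables (K : fieldType) (n d : nat) (e : nat -> nat).
Hypothesis hn : (2 <= n)%N.
Hypothesis he_le : forall j, (j <= n)%N -> (e j <= d.-1)%N.
Hypothesis he_mono : forall j j', (j < j' <= n)%N -> (e j < e j')%N.

Lemma mu_0 (j : 'I_n.+1) : mu d e j ord0 = e j.
Proof. by rewrite /mu mnmDE !mulmnE !mnm1E /=; lia. Qed.
Lemma mu_1 (j : 'I_n.+1) : mu d e j ord_max = (d.-1 - e j)%N.
Proof. by rewrite /mu mnmDE !mulmnE !mnm1E /=; lia. Qed.

Lemma pex_homog j : @pex K n d e j \is (d.-1).-homog.
Proof.
rewrite /pex dhomogX; apply/eqP.
suff : mdeg (mu d e j) = d.-1 by [].
have -> : mdeg (mu d e j) = (e j + (d.-1 - e j))%N.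
  rewrite mdegE big_ord_recr big_ord1 /=.
  have -> : widen_ord (leqnSn 1) ord0 = ord0 :> 'I_2 by apply: ord_inj.
  by rewrite mu_0 mu_1.
by have := he_le (ltn_ord j); lia.
Qed.

Lemma pex_indep : lin_indep_fam predT (@pex K n d e).
Proof.
move=> c hc j _.
have := congr1 (mcoeff (mu d e j)) hc; rewrite raddf_sum /= (bigD1 j) //= big1 ?addr0.
  by rewrite mcoeffZ mcoeffX eqxx mulr1 mcoeff0.
move=> k nkj; rewrite mcoeffZ mcoeffX.
suff -> : (mu d e k == mu d e j) = false by rewrite mulr0.
apply/negbTE; apply: contra nkj => /eqP /(congr1 (fun m : 'X_{1..2} => m ord0)).
rewrite !mu_0 => h; apply/eqP/ord_inj.
have := ltn_ord k; have := ltn_ord j; rewrite !ltnS => hj hk.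
case: (ltngtP k j) => // [lt|lt].
  by have := he_mono (j:=k) (j':=j); rewrite lt hj h ltnn => /(_ isT).
by have := he_mono (j:=j) (j':=k); rewrite lt hk h ltnn => /(_ isT).
Qed.

Lemma pex_algdep : alg_dep (@pex K n d e).
Proof.
pose i0 : 'I_n.+1 := ord0; pose i1 : 'I_n.+1 := inord 1; pose i2 : 'I_n.+1 := inord 2.
have v1 : nat_of_ord i1 = 1%N by rewrite /i1 inordK //; lia.
have v2 : nat_of_ord i2 = 2%N by rewrite /i2 inordK //; lia.
have e01 : (e 0 < e 1)%N by apply: he_mono; lia.
have e12 : (e 1 < e 2)%N by apply: he_mono; lia.
have e2D : (e 2 <= d.-1)%N by apply: he_le.
pose al := (e 2 - e 1)%N; pose be := (e 1 - e 0)%N; pose ga := (e 2 - e 0)%N.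
pose a : 'X_{1..n.+1} := (U_(i0) *+ al + U_(i2) *+ be)%MM.
pose b : 'X_{1..n.+1} := (U_(i1) *+ ga)%MM.
exists ('X_[a] - 'X_[b]); split.
  apply/eqP => /(congr1 (mcoeff b)); rewrite mcoeffB !mcoeffX eqxx mcoeff0.
  have -> : (a == b) = false.
    apply/negbTE/eqP => /(congr1 (fun m : 'X_{1..n.+1} => m i1)).
    rewrite /a /b mnmDE !mulmnE !mnm1E.
    have -> : (i0 == i1) = false by apply/negbTE; rewrite -val_eqE /= v1.
    have -> : (i2 == i1) = false by apply/negbTE; rewrite -val_eqE /= v1 v2.
    rewrite eqxx /ga; lia.
  by move/eqP; rewrite sub0r oppr_eq0 oner_eq0.
rewrite /a /b mpolyXD -!mpolyXn rmorphB rmorphM /= !rmorphXn /= !comp_mpolyXU.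
rewrite -!(tnth_nth 0) !tnth_mktuple /pex !mpolyXn -mpolyXD.
apply/eqP; rewrite subr_eq0; apply/eqP; congr 'X_[_].
have ee0 : e i0 = e 0 by [].
have ee1 : e i1 = e 1 by rewrite v1.
have ee2 : e i2 = e 2 by rewrite v2.
apply/mnmP => k.
have [->|->] : k = ord0 \/ k = ord_max.
  by case: k => [[|[|//]]] hk; [left|right]; apply: ord_inj.
  rewrite !mnmDE !mulmnE !mu_0 ee0 ee1 ee2 /al /be /ga.
  set x := (e 1 - e 0)%N; set y := (e 2 - e 1)%N.
  have h1 : e 1 = (e 0 + x)%N by rewrite /x; lia.
  have h2 : e 2 = (e 0 + x + y)%N by rewrite /x /y; lia.
  have -> : (e 2 - e 0)%N = (x + y)%N by lia.
  rewrite h1 h2; nia.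
rewrite !mnmDE !mulmnE !mu_1 ee0 ee1 ee2 /al /be /ga.
set x := (e 1 - e 0)%N; set y := (e 2 - e 1)%N; set z := (d.-1 - e 2)%N.
have -> : (d.-1 - e 0)%N = (x + y + z)%N by rewrite /x /y /z; lia.
have -> : (d.-1 - e 1)%N = (y + z)%N by rewrite /x /y /z; lia.
have -> : (e 2 - e 0)%N = (x + y)%N by rewrite /x /y; lia.
nia.
Qed.

End Data.


Section Num.
Variables (n d : nat).
Hypothesis hn : (2 <= n)%N.
Hypothesis hd : (n + 1 <= d)%N.

Definition tq := (d.+1 %/ n.+2)%N.
Definition rq := (d.+1 %% n.+2)%N.
Definition econ (j : nat) : nat := ((j.+1 * tq).-1 + minn j rq)%N.

Lemma hdiv : d.+1 = (n * tq + 2 * tq + rq)%N.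
Proof. by rewrite [LHS](divn_eq _ n.+2) -/tq -/rq; nia. Qed.
Lemma hrr : (rq < n.+2)%N.
Proof. exact: ltn_pmod. Qed.
Lemma htt : (1 <= tq)%N.
Proof. by rewrite /tq divn_gt0 //; lia. Qed.

Lemma econE j : econ j = (j * tq + tq - 1 + minn j rq)%N.
Proof. by rewrite /econ mulSn; have := htt; lia. Qed.

Lemma econ0 : econ 0 = (tq - 1)%N.
Proof. by rewrite econE; lia. Qed.

Lemma econS j : (econ j + tq <= econ j.+1 <= econ j + tq + 1)%N.
Proof. by rewrite !econE mulSn; have := htt; lia. Qed.

Lemma econ_n : (d - tq - 1 <= econ n <= d - tq)%N.
Proof. by rewrite econE; have := hdiv; have := hrr; have := htt; lia. Qed.

Lemma econ_lt j j' : (j < j')%N -> (econ j + tq <= econ j')%N.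
Proof.
move=> hjj; rewrite !econE.
have : (j.+1 * tq <= j' * tq)%N by rewrite leq_mul2r hjj orbT.
rewrite mulSn.
by have := htt; lia.
Qed.

Lemma econ_mono j j' : (j < j' <= n)%N -> (econ j < econ j')%N.
Proof. by case/andP => h _; have := econ_lt h; have := htt; lia. Qed.

Lemma econ_le j : (j <= n)%N -> (econ j <= econ n)%N.
Proof.
rewrite leq_eqVlt => /orP [/eqP -> //|h].
by have := econ_lt h; lia.
Qed.

Lemma econ_led j : (j <= n)%N -> (econ j <= d.-1)%N.
Proof. by move=> /econ_le; have := econ_n; have := htt; lia. Qed.

Lemma econ_inj j j' : (j <= n)%N -> (j' <= n)%N -> econ j = econ j' -> j = j'.
Proof.
move=> hj hj' e; case: (ltngtP j j') => // h.
  by have := econ_lt h; have := htt; lia.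
by have := econ_lt h; have := htt; lia.
Qed.

Lemma econ_ge0 j : (tq - 1 <= econ j)%N.
Proof. by rewrite econE; lia. Qed.

Lemma cover k L : (tq + 1 <= L)%N -> (k <= econ n)%N ->
  exists j : 'I_n.+1, (k <= econ j)%N && (econ j <= k + L - 1)%N.
Proof.
move=> hL hk.
suff : forall m, (m <= n)%N -> (k <= econ m)%N -> exists j, (j <= m)%N && (k <= econ j <= k + L - 1)%N.
  case/(_ n (leqnn n) hk) => j /andP [hjn hj].
  by exists (Ordinal (hjn : (j < n.+1)%N)).
elim => [|m ih] hm hkm.
  by exists 0%N; rewrite leqnn hkm /= econ0; lia.
have [hk2|hk2] := leqP k (econ m).
  have [j /andP [hj1 hj2]] := ih (ltnW hm) hk2.
  by exists j; rewrite hj2 (leq_trans hj1).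
exists m.+1; rewrite leqnn hkm /=.
by have := econS m; lia.
Qed.

Lemma h4t : (4 * tq <= d.+1)%N.
Proof. by have := hdiv; nia. Qed.

Lemma lower_target (K : fieldType) (charK0 : [pchar K] =i pred0) (i : nat) :
  (1 <= i)%N -> (i <= d./2)%N ->
  (minn ((n + 2) * i + 1) (d + 2) <= hvec (perazzo_form (@pex K n d econ) 0) i)%N.
Proof.
move=> hi; rewrite geq_half_double -muln2 => h2i.
have h4 := h4t; have hnd := econ_n; have ht := htt.
pose jb (a : 'I_i.+1) := odflt ord0 [pick j : 'I_n.+1 | (a <= econ j) && (econ j <= a + (d - i) - 1)]%N.
have hjb (a : 'I_i.+1) : (a <= econ (jb a))%N /\ (i - a <= d.-1 - econ (jb a))%N.
  rewrite /jb; case: pickP => [j /andP [h1 h2]|hno] /=.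
    by have := ltn_ord a; lia.
  have [j hj] := @cover a (d - i) ltac:(lia) ltac:(have := ltn_ord a; lia).
  by move: (hno j); rewrite hj.
have hle := econ_led; have hinj := econ_inj.
have [hA|hB] := leqP i tq.
  have hlow := @lower K charK0 n d econ hle hinj i ('I_n.+1 * 'I_i)%type
    (fun z => z.1) (fun z => nat_of_ord z.2) jb hi.
  have hval (z : 'I_n.+1 * 'I_i) :
      [/\ (z.2 < i)%N, (z.2 <= econ z.1)%N & (i.-1 - z.2 <= d.-1 - econ z.1)%N].
    have := econ_ge0 z.1; have := econ_le (ltn_ord z.1 : (z.1 <= n)%N).
    by have := ltn_ord z.2; split; lia.
  have hkk (z z' : 'I_n.+1 * 'I_i) : (econ z.1 - z.2 = econ z'.1 - z'.2)%N -> z = z'.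
    case: z z' => [j a] [j' a'] /= h.
    have := ltn_ord a; have := ltn_ord a'; have := econ_ge0 j; have := econ_ge0 j'.
    case: (ltngtP j j') => hjj.
    - by have := econ_lt hjj; lia.
    - by have := econ_lt hjj; lia.
    - have ejj : j = j' by apply: ord_inj.
      subst j' => *; have ea : a = a' by apply: ord_inj; lia.
      by rewrite ea.
  apply: leq_trans (hlow hval hkk hjb).
  rewrite card_prod !card_ord geq_min; apply/orP; left.
  by rewrite mulnDl; lia.
pose jj (k : 'I_(d - i).+1) := odflt ord0 [pick j : 'I_n.+1 | (k <= econ j) && (econ j <= k + i - 1)]%N.
have hjj (k : 'I_(d - i).+1) : (k <= econ (jj k))%N /\ (econ (jj k) <= k + i - 1)%N.
  rewrite /jj; case: pickP => [j /andP [h1 h2]|hno] //=.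
  have [j hj] := @cover k i ltac:(lia) ltac:(have := ltn_ord k; lia).
  by move: (hno j); rewrite hj.
have hlow := @lower K charK0 n d econ hle hinj i 'I_(d - i).+1
  jj (fun k => econ (jj k) - k)%N jb hi.
have hval (k : 'I_(d - i).+1) :
    [/\ (econ (jj k) - k < i)%N, (econ (jj k) - k <= econ (jj k))%N
      & (i.-1 - (econ (jj k) - k) <= d.-1 - econ (jj k))%N].
  have [h1 h2] := hjj k; have := ltn_ord k; have := econ_led (ltn_ord (jj k) : (jj k <= n)%N).
  by split; lia.
have hkk (k k' : 'I_(d - i).+1) :
    (econ (jj k) - (econ (jj k) - k) = econ (jj k') - (econ (jj k') - k'))%N -> k = k'.
  have [h1 _] := hjj k; have [h1' _] := hjj k' => h.
  by apply: ord_inj; lia.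
apply: leq_trans (hlow hval hkk hjb).
rewrite card_ord geq_min; apply/orP; right.
lia.
Qed.

End Num.

Theorem theorem3p5 (K : closedFieldType) (charK0 : [pchar K] =i pred0)
    (n d : nat) (hn : (2 <= n)%N) (hd : (n + 1 <= d)%N) :
  (forall (p : 'I_n.+1 -> {mpoly K[2]}) (g : {mpoly K[2]}),
      perazzo_data d p g ->
      forall i : nat, (1 <= i <= d./2)%N ->
        (hvec (perazzo_form p g) i <= minn ((n + 2) * i + 1) (d + 2))%N)
  /\
  (exists p : 'I_n.+1 -> {mpoly K[2]},
      perazzo_data d p 0 /\
      forall i : nat, (1 <= i <= d./2)%N ->
        hvec (perazzo_form p 0) i = minn ((n + 2) * i + 1) (d + 2)).
Proof.
have hd1 : (1 <= d)%N by lia.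
have hid i : (i <= d./2)%N -> (i <= d)%N.
  by rewrite geq_half_double -muln2; lia.
split.
  move=> p g [hp _ _ hg] i /andP [hi1 hi2].
  by apply: upper_bound => //; rewrite hi1 hid.
have hle := econ_led hn hd; have hmono := econ_mono hn hd.
exists (@pex K n d (econ n d)); split.
  split.
  - exact: pex_homog.
  - exact: pex_indep.
  - exact: pex_algdep.
  - exact: dhomog0.
move=> i /andP [hi1 hi2]; apply/eqP; rewrite eqn_leq; apply/andP; split.
  apply: upper_bound => //; last by rewrite hi1 hid.
    exact: pex_homog.
  exact: dhomog0.
exact: lower_target.
Qed.
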